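(* Let $\chi>0$, $\phi\in C^1(\mathbb{R})$ with $\phi'>0$, $\phi(0)>0$, and $g\in C^1([0,\infty))$ positive with exactly one $\beta>0$ such that $g'<0$ on $[0,\beta)$ and $g'>0$ on $(\beta,\infty)$. Let $g(\beta)<u_-<\min\{g(0),\lim_{V\to\infty}g(V)\}$ and $0<v_+<\beta<v_-$ with $g(v_\pm)=u_-$. Define $J(V)=V(g(V)-u_-)$ on $[0,v_+]$, $Q(V)=(v_--V)^2\inf_{z\in(V,v_-]}g'(z)$ on $(\beta,v_-)$, $$s_1:=\chi\Big(1-\frac{u_-}{g(\beta)}\Big)^{-1}\Big[\phi\Big(-\sqrt{\tfrac{1}{v_+}\textstyle\int_0^{v_+}J}\Big)-\frac{u_-\phi(0)}{g(\beta)}\Big],\quad s_2:=\chi\Big(1-\frac{u_-}{g(0)}\Big)^{-1}\Big[\phi\Big(\sqrt{\tfrac{1}{v_--\beta}\textstyle\int_\beta^{v_-}Q}\Big)-\frac{u_-\phi(0)}{g(0)}\Big],$$ $s_*=\min\{s_1,s_2\}$, and $B(V)=\frac{s}{\chi}+\frac{u_-}{g(V)}\big(\phi(0)-\frac{s}{\chi}\big)$. If $\chi\phi(0)<s<s_*$, then there exist $v_*\in(0,v_+)$ and $v^*\in(\beta,v_-)$ such that $-\sqrt{J(v_* )}<\phi^{-1}(B(\beta))<0$ and $0<\phi^{-1}(B(0))<\sqrt{Q(v^* )}$. *)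

(* Defs.v *)
From Stdlib Require Import Reals.
From Coquelicot Require Import Coquelicot.
Open Scope R_scope.

Definition Jfun (g : R -> R) (um : R) (V : R) : R := V * (g V - um).

Definition Qfun (dg : R -> R) (vm : R) (V : R) : R :=
  (vm - V) ^ 2 * real (Glb_Rbar (fun y => exists z, V < z <= vm /\ y = dg z)).

Definition s1 (chi : R) (phi g : R -> R) (um vp beta : R) : R :=
  chi * / (1 - um / g beta) *
  (phi (- sqrt (/ vp * RInt (Jfun g um) 0 vp)) - um * phi 0 / g beta).

Definition s2 (chi : R) (phi g dg : R -> R) (um vm beta : R) : R :=
  chi * / (1 - um / g 0) *
  (phi (sqrt (/ (vm - beta) * RInt (Qfun dg vm) beta vm)) - um * phi 0 / g 0).

Definition Bfun (chi s : R) (phi g : R -> R) (um : R) (V : R) : R :=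
  s / chi + um / g V * (phi 0 - s / chi).

(* Main.v *)
Require Import Defs.
From Stdlib Require Import Reals.
From Coquelicot Require Import Coquelicot.
From Stdlib Require Import Lra Classical.
Open Scope R_scope.

Lemma RInt_not_ex (f : R -> R) a b : ~ ex_RInt f a b -> RInt f a b = 0.
Proof.
intros H. unfold RInt, iota, lim. simpl. unfold R_complete_lim.
match goal with |- real (Lub_Rbar ?E) = 0 =>
  destruct (Lub_Rbar_correct E) as [Hub _]; destruct (Lub_Rbar E) as [r| |] eqn:Hl end; simpl; auto.
exfalso. assert (Hr := Hub (r+1)). simpl in Hr.
assert (r + 1 <= r). { apply Hr. intros y Hy. exfalso; apply H; exists y; exact Hy. }
lra.
Qed.

Lemma RInt_ub (f : R -> R) a b c : a < b -> 0 <= c ->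
  (forall x, a < x < b -> f x <= c) -> / (b - a) * RInt f a b <= c.
Proof.
intros Hab Hc H.
destruct (classic (ex_RInt f a b)) as [Hex|Hn].
- assert (RInt f a b <= RInt (fun _ => c) a b).
  { apply RInt_le; auto; [lra| apply ex_RInt_const]. }
  rewrite RInt_const in H0. unfold scal in H0; simpl in H0; unfold mult in H0; simpl in H0.
  apply Rmult_le_reg_l with (b - a); [lra|].
  rewrite <- Rmult_assoc, Rinv_r by lra. lra.
- rewrite RInt_not_ex by auto. rewrite Rmult_0_r. auto.
Qed.

Lemma exists_above (f : R -> R) a b w : a < b ->
  w < sqrt (/ (b - a) * RInt f a b) -> 0 <= w ->
  exists v, a < v < b /\ w < sqrt (f v).
Proof.
intros Hab Hw Hw0.
destruct (classic (exists v, a < v < b /\ w * w < f v)) as [[v [Hv Hfv]]|Hn].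
- exists v; split; auto. rewrite <- (sqrt_square w) at 1 by auto.
  apply sqrt_lt_1_alt. split; nra.
- assert (H : / (b - a) * RInt f a b <= w * w).
  { apply RInt_ub; auto; [nra|]. intros x Hx. apply Rnot_lt_le. intro C. apply Hn. eauto. }
  apply sqrt_le_1_alt in H. rewrite sqrt_square in H by auto. lra.
Qed.

Theorem proposition2p10
  (chi : R) (phi dphi g dg : R -> R) (beta um vp vm s : R)
  (Hchi : 0 < chi)
  (* phi in C^1(R), phi' > 0, phi(0) > 0 *)
  (Hphi_der : forall x, is_derive phi x (dphi x))
  (Hdphi_cont : forall x, continuous dphi x)
  (Hdphi_pos : forall x, 0 < dphi x)
  (Hphi0 : 0 < phi 0)
  (* g in C^1([0,oo)) with derivative dg (one-sided at 0), g > 0 *)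
  (Hg_der : forall x, 0 < x -> is_derive g x (dg x))
  (Hg_der0 : filterlim (fun h => (g h - g 0) / h) (at_right 0) (locally (dg 0)))
  (Hdg_cont : forall x, 0 < x -> continuous dg x)
  (Hdg_cont0 : filterlim dg (at_right 0) (locally (dg 0)))
  (Hg_pos : forall x, 0 <= x -> 0 < g x)
  (* beta *)
  (Hbeta : 0 < beta)
  (Hdg_neg : forall x, 0 <= x < beta -> dg x < 0)
  (Hdg_pos : forall x, beta < x -> 0 < dg x)
  (* u_- *)
  (Hum1 : g beta < um)
  (Hum2 : um < g 0)
  (Hum3 : Rbar_lt (Finite um) (Lim g p_infty))
  (* v_+- *)
  (Hv : 0 < vp < beta /\ beta < vm)
  (Hgvp : g vp = um) (Hgvm : g vm = um)
  (* speed *)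
  (Hs : chi * phi 0 < s /\ s < Rmin (s1 chi phi g um vp beta) (s2 chi phi g dg um vm beta)) :
  (exists vs, 0 < vs < vp /\
     exists w, phi w = Bfun chi s phi g um beta /\ - sqrt (Jfun g um vs) < w < 0) /\
  (exists vS, beta < vS < vm /\
     exists w, phi w = Bfun chi s phi g um 0 /\ 0 < w < sqrt (Qfun dg vm vS)).
Proof.
destruct Hs as [Hs0 Hs].
assert (Hs1 : s < s1 chi phi g um vp beta) by (eapply Rlt_le_trans; [exact Hs| apply Rmin_l]).
assert (Hs2 : s < s2 chi phi g dg um vm beta) by (eapply Rlt_le_trans; [exact Hs| apply Rmin_r]).
clear Hs.
assert (Hcont : forall x : R_UniformSpace, continuous phi x).
{ intro x. apply (@ex_derive_continuous R_AbsRing R_NormedModule). exists (dphi x). apply Hphi_der. }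
assert (Hincr : forall x y, x < y -> phi x < phi y).
{ intros x y Hxy. destruct (MVT_gen phi x y dphi) as [c [Hc Hc2]].
  - intros z _. apply Hphi_der.
  - intros z _. apply continuity_pt_filterlim. apply Hcont.
  - rewrite Rmin_left, Rmax_right in Hc by lra.
    assert (0 < dphi c) by apply Hdphi_pos. nra. }
assert (Hsc : phi 0 < s / chi).
{ apply Rmult_lt_reg_l with chi; auto. unfold Rdiv. rewrite <- Rmult_assoc, (Rmult_comm chi s), Rmult_assoc, Rinv_r by lra. lra. }
assert (Hgb := Hg_pos beta ltac:(lra)).
assert (Hg0 := Hg_pos 0 ltac:(lra)).
split.
- set (I := / vp * RInt (Jfun g um) 0 vp).
  set (a := um / g beta).
  assert (Ha : 1 < a). { unfold a. apply Rmult_lt_reg_r with (g beta); auto. unfold Rdiv. rewrite Rmult_assoc, Rinv_l by lra. lra. }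
  set (p := phi (- sqrt I)).
  assert (Hs1' : s1 chi phi g um vp beta = chi * / (1 - a) * (p - a * phi 0)).
  { unfold s1, a, p, I. f_equal. f_equal. field. lra. }
  rewrite Hs1' in Hs1.
  assert (HB : Bfun chi s phi g um beta = s / chi * (1 - a) + a * phi 0).
  { unfold Bfun, a. ring. }
  set (t := s / chi) in *.
  assert (Hst : s = chi * t). { unfold t. field. lra. }
  rewrite Hst in Hs1.
  assert (Hlt : t * (1 - a) > p - a * phi 0).
  { assert (E : chi * / (1 - a) * (p - a * phi 0) * (1 - a) = chi * (p - a * phi 0)) by (field; lra).
    assert (chi * t * (1 - a) > chi * (p - a * phi 0)) by nra. nra. }
  set (Bb := Bfun chi s phi g um beta) in *.
  assert (HBlo : p < Bb) by lra.
  assert (HBhi : Bb < phi 0) by nra.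
  assert (HI : 0 < sqrt I).
  { destruct (Rle_lt_dec (sqrt I) 0) as [Hle|]; auto.
    assert (sqrt I = 0) by (pose proof (sqrt_pos I); lra).
    unfold p in HBlo. rewrite H, Ropp_0 in HBlo. lra. }
  destruct (IVT_gen_consistent phi (- sqrt I) 0 Bb Hcont) as [w [Hw Hpw]].
  { fold p. rewrite Rmin_left, Rmax_right; lra. }
  rewrite Rmin_left, Rmax_right in Hw by lra.
  assert (w <> 0) by (intro E0; rewrite E0 in Hpw; lra).
  assert (w <> - sqrt I) by (intro E; rewrite E in Hpw; fold p in Hpw; lra).
  destruct (exists_above (Jfun g um) 0 vp (- w)) as [v [Hv1 Hv2]]; try lra.
  { rewrite Rminus_0_r. fold I. lra. }
  exists v; split; auto. exists w; split; auto. lra.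
- set (K := / (vm - beta) * RInt (Qfun dg vm) beta vm).
  set (a := um / g 0).
  assert (Ha : a < 1). { unfold a. apply Rmult_lt_reg_r with (g 0); auto. unfold Rdiv. rewrite Rmult_assoc, Rinv_l by lra. lra. }
  assert (Ha0 : 0 < a). { unfold a. apply Rdiv_lt_0_compat; lra. }
  set (p := phi (sqrt K)).
  assert (Hs2' : s2 chi phi g dg um vm beta = chi * / (1 - a) * (p - a * phi 0)).
  { unfold s2, a, p, K. f_equal. f_equal. field. lra. }
  rewrite Hs2' in Hs2.
  assert (HB : Bfun chi s phi g um 0 = s / chi * (1 - a) + a * phi 0).
  { unfold Bfun, a. ring. }
  set (t := s / chi) in *.
  assert (Hst : s = chi * t). { unfold t. field. lra. }
  rewrite Hst in Hs2.
  assert (Hlt : t * (1 - a) < p - a * phi 0).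
  { assert (E : chi * / (1 - a) * (p - a * phi 0) * (1 - a) = chi * (p - a * phi 0)) by (field; lra).
    assert (chi * t * (1 - a) < chi * (p - a * phi 0)) by nra. nra. }
  set (Bb := Bfun chi s phi g um 0) in *.
  assert (HBhi : Bb < p) by lra.
  assert (HBlo : phi 0 < Bb) by nra.
  assert (HI : 0 < sqrt K).
  { destruct (Rle_lt_dec (sqrt K) 0) as [Hle|]; auto.
    assert (sqrt K = 0) by (pose proof (sqrt_pos K); lra).
    unfold p in HBhi. rewrite H in HBhi. lra. }
  destruct (IVT_gen_consistent phi 0 (sqrt K) Bb Hcont) as [w [Hw Hpw]].
  { fold p. rewrite Rmin_left, Rmax_right; lra. }
  rewrite Rmin_left, Rmax_right in Hw by lra.
  assert (w <> 0) by (intro E0; rewrite E0 in Hpw; lra).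
  assert (w <> sqrt K) by (intro E; rewrite E in Hpw; fold p in Hpw; lra).
  assert (w < sqrt K) by (destruct Hw as [_ Hw]; destruct Hw; [auto|contradiction]).
  destruct (exists_above (Qfun dg vm) beta vm w) as [v [Hv1 Hv2]].
  all: try lra.
  1: exact H1.
  exists v; split; auto. exists w; split; auto. lra.
Qed.
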